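(* Let $\mathbb{X}$ be a real reflexive Banach space and $\mathbb{Y}$ a real normed space. Let $T,A \in \mathbb{K}(\mathbb{X},\mathbb{Y})$ with $A \neq 0$, and let $0 \le \epsilon < 1$. Then $T \perp_D^{\epsilon} A$ if and only if at least one of the following holds: (a) there exists $x \in M_T$ such that $Ax \in (Tx)^+$, and for each $\lambda \in \left(-1-\sqrt{1-\epsilon^2},\, -1+\sqrt{1-\epsilon^2}\right)\frac{\|T\|}{\|A\|}$ there exists $x_\lambda \in S_{\mathbb{X}}$ with $\|Tx_\lambda + \lambda A x_\lambda\| \ge \sqrt{1-\epsilon^2}\,\|T\|$; (b) there exists $y \in M_T$ such that $Ay \in (Ty)^-$, and for each $\lambda \in \left(1-\sqrt{1-\epsilon^2},\, 1+\sqrt{1-\epsilon^2}\right)\frac{\|T\|}{\|A\|}$ there exists $y_\lambda \in S_{\mathbb{X}}$ with $\|Ty_\lambda + \lambda A y_\lambda\| \ge \sqrt{1-\epsilon^2}\,\|T\|$.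
   Context: All spaces are real. $\mathbb{K}(\mathbb{X},\mathbb{Y})$ denotes the space of compact linear operators from $\mathbb{X}$ to $\mathbb{Y}$. $S_{\mathbb{X}}=\{x\in\mathbb{X}:\|x\|=1\}$. For a bounded linear operator $T$, $M_T=\{x\in S_{\mathbb{X}}: \|Tx\|=\|T\|\}$ (norm attainment set). For elements $u,v$ of a normed space, $v \in u^+$ means $\|u+\lambda v\|\ge\|u\|$ for all $\lambda\ge 0$, and $v\in u^-$ means $\|u+\lambda v\|\ge\|u\|$ for all $\lambda\le 0$. For $\epsilon\in[0,1)$ and $u,v$ in a normed space (in particular operators with the operator norm), $u\perp_D^{\epsilon} v$ means $\|u+\lambda v\|\ge\sqrt{1-\epsilon^2}\,\|u\|$ for all $\lambda\in\mathbb{R}$. *)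

(* Defs.v *)
From Stdlib Require Import Reals Lra ClassicalEpsilon.
Open Scope R_scope.

Record NormedSpace := {
  carrier :> Type;
  vzero : carrier;
  vadd : carrier -> carrier -> carrier;
  vopp : carrier -> carrier;
  vscal : R -> carrier -> carrier;
  vnorm : carrier -> R;
  vadd_assoc : forall x y z, vadd x (vadd y z) = vadd (vadd x y) z;
  vadd_comm : forall x y, vadd x y = vadd y x;
  vadd_0 : forall x, vadd x vzero = x;
  vadd_opp : forall x, vadd x (vopp x) = vzero;
  vscal_assoc : forall a b x, vscal a (vscal b x) = vscal (a * b) x;
  vscal_1 : forall x, vscal 1 x = x;
  vscal_addv : forall a x y, vscal a (vadd x y) = vadd (vscal a x) (vscal a y);
  vscal_adds : forall a b x, vscal (a + b) x = vadd (vscal a x) (vscal b x);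
  vnorm_eq0 : forall x, vnorm x = 0 -> x = vzero;
  vnorm_scal : forall a x, vnorm (vscal a x) = Rabs a * vnorm x;
  vnorm_triangle : forall x y, vnorm (vadd x y) <= vnorm x + vnorm y
}.

Arguments vzero {n}.
Arguments vadd {n}.
Arguments vopp {n}.
Arguments vscal {n}.
Arguments vnorm {n}.

Definition vsub {X : NormedSpace} (x y : X) : X := vadd x (vopp y).

Definition is_Banach (X : NormedSpace) : Prop :=
  forall u : nat -> X,
    (forall eps, eps > 0 -> exists N, forall m n, (m >= N)%nat -> (n >= N)%nat ->
        vnorm (vsub (u m) (u n)) < eps) ->
    exists l : X, forall eps, eps > 0 -> exists N, forall n, (n >= N)%nat ->
        vnorm (vsub (u n) l) < eps.

Definition sup_ball {X : NormedSpace} (g : X -> R) : R :=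
  epsilon (inhabits 0)
    (fun r => is_lub (fun s => exists x : X, vnorm x <= 1 /\ s = g x) r).

Definition is_linear {X Y : NormedSpace} (T : X -> Y) : Prop :=
  (forall x y, T (vadd x y) = vadd (T x) (T y)) /\
  (forall a x, T (vscal a x) = vscal a (T x)).

Definition opnorm {X Y : NormedSpace} (T : X -> Y) : R :=
  sup_ball (fun x => vnorm (T x)).

Definition is_bounded_functional {X : NormedSpace} (f : X -> R) : Prop :=
  (forall x y, f (vadd x y) = f x + f y) /\
  (forall a x, f (vscal a x) = a * f x) /\
  (exists C, forall x, Rabs (f x) <= C * vnorm x).

Definition dualnorm {X : NormedSpace} (f : X -> R) : R :=
  sup_ball (fun x => Rabs (f x)).

(* Reflexivity: every continuous linear functional on the dual X* is
   evaluation at some point of X (canonical embedding X -> X** surjective). *)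
Definition is_reflexive (X : NormedSpace) : Prop :=
  forall phi : (X -> R) -> R,
    (forall f g, is_bounded_functional f -> is_bounded_functional g ->
        phi (fun x => f x + g x) = phi f + phi g) ->
    (forall a f, is_bounded_functional f -> phi (fun x => a * f x) = a * phi f) ->
    (exists C, forall f, is_bounded_functional f -> Rabs (phi f) <= C * dualnorm f) ->
    exists x0 : X, forall f, is_bounded_functional f -> phi f = f x0.

(* Compact linear operators: linear, and the image of the closed unit ball is
   relatively compact, i.e. (metric space) every sequence in it has a
   subsequence converging in Y. *)
Definition is_compact_op {X Y : NormedSpace} (T : X -> Y) : Prop :=
  is_linear T /\
  forall u : nat -> X, (forall n, vnorm (u n) <= 1) ->
    exists (phi : nat -> nat) (l : Y),
      (forall n, (phi n < phi (S n))%nat) /\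
      (forall eps, eps > 0 -> exists N, forall n, (n >= N)%nat ->
          vnorm (vsub (T (u (phi n))) l) < eps).

Definition unit_sphere {X : NormedSpace} (x : X) : Prop := vnorm x = 1.

Definition M_set {X Y : NormedSpace} (T : X -> Y) (x : X) : Prop :=
  unit_sphere x /\ vnorm (T x) = opnorm T.

Definition in_plus {Y : NormedSpace} (u v : Y) : Prop :=
  forall lam, lam >= 0 -> vnorm (vadd u (vscal lam v)) >= vnorm u.
Definition in_minus {Y : NormedSpace} (u v : Y) : Prop :=
  forall lam, lam <= 0 -> vnorm (vadd u (vscal lam v)) >= vnorm u.

Definition op_add_scal {X Y : NormedSpace} (T A : X -> Y) (lam : R) : X -> Y :=
  fun x => vadd (T x) (vscal lam (A x)).

Definition BJ_eps_orth {X Y : NormedSpace} (eps : R) (T A : X -> Y) : Prop :=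
  forall lam, opnorm (op_add_scal T A lam) >= sqrt (1 - eps ^ 2) * opnorm T.

(* Main.v *)
Require Import Defs.
From Stdlib Require Import Reals Lra Lia ClassicalEpsilon Classical FunctionalExtensionality.
From mathcomp Require classical_sets boolp.
Open Scope R_scope.

Lemma ab_i (P : Prop) : P -> is_true (boolp.asbool P).
Proof. intro H. exact (ssrbool.introT (boolp.asboolP P) H). Qed.
Lemma ab_e (P : Prop) : is_true (boolp.asbool P) -> P.
Proof. intro H. exact (ssrbool.elimT (boolp.asboolP P) H). Qed.

Definition inf_set (P : R -> Prop) : R :=
  - epsilon (inhabits 0) (fun r => is_lub (fun x => P (-x)) r).

Lemma inf_spec (P : R -> Prop) : (exists x, P x) -> (exists m, forall x, P x -> m <= x) ->
  is_lub (fun x => P (-x)) (- inf_set P).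
Proof.
  intros [x Hx] [m Hm]. unfold inf_set. rewrite Ropp_involutive.
  apply epsilon_spec.
  destruct (completeness (fun x => P (-x))) as [l Hl].
  - exists (-m). intros y Hy. apply Hm in Hy. lra.
  - exists (-x). rewrite Ropp_involutive. exact Hx.
  - exists l. exact Hl.
Qed.

Lemma inf_lb (P : R -> Prop) x : (exists m, forall x, P x -> m <= x) -> P x -> inf_set P <= x.
Proof.
  intros Hm Hx. destruct (inf_spec P (ex_intro _ x Hx) Hm) as [H1 _].
  assert (P (- - x)) by (rewrite Ropp_involutive; exact Hx).
  apply H1 in H. lra.
Qed.

Lemma inf_glb (P : R -> Prop) c : (exists x, P x) -> (forall x, P x -> c <= x) -> c <= inf_set P.
Proof.
  intros Hx Hc. destruct (inf_spec P Hx (ex_intro _ c Hc)) as [_ H2].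
  assert (- inf_set P <= - c); [|lra].
  apply H2. intros y Hy. apply Hc in Hy. lra.
Qed.

Section HB.
Variable V : Type.
Variables (zero : V) (add : V -> V -> V) (scal : R -> V -> V).
Hypothesis add_assoc : forall x y z, add x (add y z) = add (add x y) z.
Hypothesis add_comm : forall x y, add x y = add y x.
Hypothesis add_0 : forall x, add x zero = x.
Hypothesis scal_assoc : forall a b x, scal a (scal b x) = scal (a * b) x.
Hypothesis scal_1 : forall x, scal 1 x = x.
Hypothesis scal_addv : forall a x y, scal a (add x y) = add (scal a x) (scal a y).
Hypothesis scal_adds : forall a b x, scal (a + b) x = add (scal a x) (scal b x).
Hypothesis scal_0 : forall x, scal 0 x = zero.
Variable D : V -> Prop.
Hypothesis D_zero : D zero.
Hypothesis D_add : forall u v, D u -> D v -> D (add u v).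
Hypothesis D_scal : forall a u, D u -> D (scal a u).

Definition sublin (q : V -> R) :=
  (forall u v, D u -> D v -> q (add u v) <= q u + q v) /\
  (forall c u, 0 < c -> D u -> q (scal c u) = c * q u).

Definition linD (L : V -> R) :=
  (forall u v, D u -> D v -> L (add u v) = L u + L v) /\
  (forall a u, D u -> L (scal a u) = a * L u).

Lemma scal_zero c : scal c zero = zero.
Proof. rewrite <- (scal_0 zero) at 1. rewrite scal_assoc. rewrite Rmult_0_r. apply scal_0. Qed.

Lemma I_neg u : add u (scal (-1) u) = zero.
Proof. rewrite <- (scal_1 u) at 1. rewrite <- scal_adds. replace (1 + -1) with 0 by ring. apply scal_0. Qed.

Lemma I1 v a : add v (scal 0 a) = v.
Proof. rewrite scal_0. apply add_0. Qed.

Lemma I2 v t a : add (add v (scal t a)) (scal (-1) v) = scal t a.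
Proof. rewrite (add_comm v). rewrite <- add_assoc. rewrite I_neg. apply add_0. Qed.

Lemma add_swap4 a b c e : add (add a b) (add c e) = add (add a c) (add b e).
Proof.
  rewrite <- !add_assoc. f_equal. rewrite !add_assoc. f_equal. apply add_comm.
Qed.

Lemma I3 u v s t a : add (add u v) (scal (s+t) a) = add (add u (scal s a)) (add v (scal t a)).
Proof. rewrite scal_adds. apply add_swap4. Qed.

Lemma I4 c v t a : scal c (add v (scal t a)) = add (scal c v) (scal (c*t) a).
Proof. rewrite scal_addv, scal_assoc. reflexivity. Qed.

Lemma I5 z : add (scal (-1) z) (scal 1 z) = zero.
Proof. rewrite add_comm, scal_1. apply I_neg. Qed.

Lemma sublin_zero q : sublin q -> q zero = 0.
Proof.
  intros [_ H]. assert (E := H 2 zero ltac:(lra) D_zero). rewrite scal_zero in E. lra.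
Qed.

Lemma sublin_hom0 q : sublin q -> forall t u, 0 <= t -> D u -> q (scal t u) = t * q u.
Proof.
  intros Hq t u Ht Du. destruct (Rle_lt_or_eq_dec 0 t Ht) as [Hlt|Heq].
  - apply (proj2 Hq); auto.
  - subst t. rewrite scal_0, (sublin_zero q Hq). ring.
Qed.

Lemma sublin_lower q u : sublin q -> D u -> - q (scal (-1) u) <= q u.
Proof.
  intros Hq Du. assert (E := proj1 Hq u (scal (-1) u) Du (D_scal _ _ Du)).
  rewrite I_neg, (sublin_zero q Hq) in E. lra.
Qed.

Definition qs (q : V -> R) (a v : V) : R :=
  inf_set (fun r => exists t, 0 <= t /\ r = q (add v (scal t a)) - t * q a).

Section QS.
Variable q : V -> R.
Hypothesis Hq : sublin q.
Variable a : V.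
Hypothesis Da : D a.

Lemma qs_bound v : D v -> exists m, forall x,
  (exists t, 0 <= t /\ x = q (add v (scal t a)) - t * q a) -> m <= x.
Proof.
  intros Dv. exists (- q (scal (-1) v)). intros x [t [Ht ->]].
  rewrite <- (sublin_hom0 q Hq t a Ht Da).
  assert (E := proj1 Hq (add v (scal t a)) (scal (-1) v) (D_add _ _ Dv (D_scal _ _ Da)) (D_scal _ _ Dv)).
  rewrite I2 in E. lra.
Qed.

Lemma qs_le v t : D v -> 0 <= t -> qs q a v <= q (add v (scal t a)) - t * q a.
Proof. intros Dv Ht. apply inf_lb. apply qs_bound; auto. exists t; split; auto. Qed.

Lemma qs_ge v c : (forall t, 0 <= t -> c <= q (add v (scal t a)) - t * q a) -> c <= qs q a v.
Proof.
  intros H. apply inf_glb. exists (q (add v (scal 0 a)) - 0 * q a). exists 0; split; auto; lra.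
  intros x [t [Ht ->]]. apply H; auto.
Qed.

Lemma qs_le_q v : D v -> qs q a v <= q v.
Proof. intros Dv. assert (E := qs_le v 0 Dv (Rle_refl 0)). rewrite I1 in E. lra. Qed.

Lemma qs_sublin : sublin (qs q a).
Proof.
  split.
  - intros u v Du Dv.
    assert (K : forall s t, 0 <= s -> 0 <= t ->
      qs q a (add u v) <= (q (add u (scal s a)) - s * q a) + (q (add v (scal t a)) - t * q a)).
    { intros s t Hs Ht. eapply Rle_trans. apply (qs_le (add u v) (s+t)); auto. lra.
      rewrite I3. assert (E := proj1 Hq (add u (scal s a)) (add v (scal t a))
        (D_add _ _ Du (D_scal _ _ Da)) (D_add _ _ Dv (D_scal _ _ Da))). lra. }
    assert (K2 : forall t, 0 <= t -> qs q a (add u v) - (q (add v (scal t a)) - t * q a) <= qs q a u).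
    { intros t Ht. apply qs_ge. intros s Hs. specialize (K s t Hs Ht). lra. }
    assert (K3 : qs q a (add u v) - qs q a u <= qs q a v).
    { apply qs_ge. intros t Ht. specialize (K2 t Ht). lra. }
    lra.
  - intros c v Hc Dv. apply Rle_antisym.
    + assert (K : qs q a (scal c v) / c <= qs q a v).
      { apply qs_ge. intros t Ht.
        assert (E := qs_le (scal c v) (c*t) (D_scal _ _ Dv) ltac:(nra)).
        rewrite <- I4 in E. rewrite (proj2 Hq c _ Hc (D_add _ _ Dv (D_scal _ _ Da))) in E.
        apply (Rmult_le_reg_l c); auto.
        replace (c * (qs q a (scal c v) / c)) with (qs q a (scal c v)) by (field; lra). lra. }
      apply (Rmult_le_compat_l c) in K; [|lra].
      replace (c * (qs q a (scal c v) / c)) with (qs q a (scal c v)) in K by (field; lra). lra.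
    + apply qs_ge. intros t Ht.
      assert (E := qs_le v (t / c) Dv ltac:(unfold Rdiv; apply Rmult_le_pos; [lra|apply Rlt_le, Rinv_0_lt_compat; lra])).
      apply (Rmult_le_compat_l c) in E; [|lra].
      replace t with (c * (t / c)) at 1 by (field; lra).
      rewrite <- I4. rewrite (proj2 Hq c _ Hc (D_add _ _ Dv (D_scal _ _ Da))).
      assert (Ec : c * (t / c) = t) by (field; lra).
      rewrite Rmult_minus_distr_l in E. rewrite <- Rmult_assoc, Ec in E. lra.
Qed.
End QS.

Section Main.
Variable p : V -> R.
Hypothesis Hp : sublin p.

Definition TT := {q : V -> R | sublin q /\ forall u, D u -> q u <= p u}.
Definition RR (s t : TT) : bool :=
  boolp.asbool (forall u, D u -> proj1_sig t u <= proj1_sig s u).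

Lemma HB_main : exists L, linD L /\ forall u, D u -> L u <= p u.
Proof.
  set (t0 := exist (fun q => sublin q /\ forall u, D u -> q u <= p u) p (conj Hp (fun u _ => Rle_refl _)) : TT).
  destruct (@classical_sets.ZL_preorder TT t0 RR) as [[q [Hq qp]] Hmax].
  - intros t. apply ab_i. intros; lra.
  - intros r s t H1 H2. apply ab_i. apply ab_e in H1. apply ab_e in H2.
    intros u Du. specialize (H1 u Du). specialize (H2 u Du). lra.
  - intros A Atot. destruct (classic (exists s, A s)) as [[s0 As0]|HA].
    2:{ exists t0. intros s As. exfalso. apply HA. exists s; auto. }
    set (qi := fun u => inf_set (fun r => exists s, A s /\ r = proj1_sig s u)).
    assert (Hb : forall u, D u -> exists m, forall x, (exists s, A s /\ x = proj1_sig s u) -> m <= x).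
    { intros u Du. exists (- p (scal (-1) u)). intros x [s [As ->]].
      destruct (proj2_sig s) as [Hs sp]. assert (E := sublin_lower _ u Hs Du).
      specialize (sp _ (D_scal (-1) u Du)). lra. }
    assert (Hle : forall s u, A s -> D u -> qi u <= proj1_sig s u).
    { intros s u As Du. apply inf_lb; auto. exists s; auto. }
    assert (Hge : forall u c, (forall s, A s -> c <= proj1_sig s u) -> c <= qi u).
    { intros u c H. apply inf_glb. exists (proj1_sig s0 u). exists s0; auto.
      intros x [s [As ->]]. auto. }
    assert (Hsub : sublin qi).
    { split.
      - intros u v Du Dv.
        assert (K : forall s1 s2, A s1 -> A s2 -> qi (add u v) <= proj1_sig s1 u + proj1_sig s2 v).
        { intros s1 s2 A1 A2.
          assert (Hs : exists s, A s /\ (forall w, D w -> proj1_sig s w <= proj1_sig s1 w) /\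
                                           (forall w, D w -> proj1_sig s w <= proj1_sig s2 w)).
          { destruct (Atot s1 s2 A1 A2) as [H|H]; apply ab_e in H.
            - exists s2. split; auto. split; auto. intros; lra.
            - exists s1. split; auto. split; auto. intros; lra. }
          destruct Hs as [s [As [H1 H2]]].
          eapply Rle_trans. apply (Hle s); auto.
          destruct (proj2_sig s) as [Hs sp].
          assert (E := proj1 Hs u v Du Dv). specialize (H1 u Du). specialize (H2 v Dv). lra. }
        assert (K2 : forall s2, A s2 -> qi (add u v) - proj1_sig s2 v <= qi u).
        { intros s2 A2. apply Hge. intros s1 A1. specialize (K s1 s2 A1 A2). lra. }
        assert (K3 : qi (add u v) - qi u <= qi v).
        { apply Hge. intros s2 A2. specialize (K2 s2 A2). lra. }
        lra.
      - intros c u Hc Du. apply Rle_antisym.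
        + assert (K : qi (scal c u) / c <= qi u).
          { apply Hge. intros s As. assert (E := Hle s _ As (D_scal c u Du)).
            destruct (proj2_sig s) as [Hs sp]. rewrite (proj2 Hs c u Hc Du) in E.
            apply (Rmult_le_reg_l c); auto.
            replace (c * (qi (scal c u) / c)) with (qi (scal c u)) by (field; lra). lra. }
          apply (Rmult_le_compat_l c) in K; [|lra].
          replace (c * (qi (scal c u) / c)) with (qi (scal c u)) in K by (field; lra). lra.
        + apply Hge. intros s As. assert (E := Hle s _ As Du).
          destruct (proj2_sig s) as [Hs sp]. rewrite (proj2 Hs c u Hc Du). nra. }
    assert (Hqp : forall u, D u -> qi u <= p u).
    { intros u Du. eapply Rle_trans. apply (Hle s0); auto. destruct (proj2_sig s0) as [Hs sp]. auto. }
    exists (exist _ qi (conj Hsub Hqp)). intros s As. apply ab_i. simpl. intros u Du. auto.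
  - exists q.
    assert (Hadd : forall v a, D v -> D a -> q v + q a <= q (add v a)).
    { intros v a Dv Da.
      set (qa := exist (fun q => sublin q /\ forall u, D u -> q u <= p u) (qs q a)
        (conj (qs_sublin q Hq a Da) (fun u Du => Rle_trans _ _ _ (qs_le_q q Hq a Da u Du) (qp u Du))) : TT).
      assert (H1 : is_true (RR (exist _ q (conj Hq qp)) qa)).
      { apply ab_i. simpl. intros u Du. apply qs_le_q; auto. }
      specialize (Hmax qa H1). apply ab_e in Hmax. rename Hmax into Hm. simpl in Hm.
      specialize (Hm v Dv). assert (E := qs_le q Hq a Da v 1 Dv ltac:(lra)).
      rewrite scal_1 in E. lra. }
    assert (Hadd2 : forall u v, D u -> D v -> q (add u v) = q u + q v).
    { intros u v Du Dv. apply Rle_antisym. apply (proj1 Hq); auto. apply Hadd; auto. }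
    assert (Hneg : forall u, D u -> q (scal (-1) u) = - q u).
    { intros u Du. assert (E := Hadd2 u (scal (-1) u) Du (D_scal _ _ Du)).
      rewrite I_neg, (sublin_zero q Hq) in E. lra. }
    split; [split|]; auto.
    intros c u Du. destruct (Rle_or_lt 0 c) as [Hc|Hc].
    + apply sublin_hom0; auto.
    + replace (scal c u) with (scal (-1) (scal (-c) u)) by (rewrite scal_assoc; f_equal; ring).
      rewrite Hneg by auto. rewrite (proj2 Hq (-c) u ltac:(lra) Du). ring.
Qed.
End Main.

Lemma HB_point p z : sublin p -> D z ->
  exists L, linD L /\ (forall u, D u -> L u <= p u) /\ L z = p z.
Proof.
  intros Hp Dz. destruct (HB_main (qs p z) (qs_sublin p Hp z Dz)) as [L [HL HLp]].
  exists L. split; auto. split.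
  - intros u Du. eapply Rle_trans. apply HLp; auto. apply qs_le_q; auto.
  - assert (E := HLp (scal (-1) z) (D_scal _ _ Dz)).
    assert (E2 := qs_le p Hp z Dz (scal (-1) z) 1 (D_scal _ _ Dz) ltac:(lra)).
    rewrite I5, (sublin_zero p Hp) in E2. rewrite (proj2 HL) in E by auto.
    assert (E3 := HLp z Dz). assert (E4 := qs_le_q p Hp z Dz z Dz). lra.
Qed.
End HB.

Lemma Rabs_m1 : Rabs (-1) = 1.
Proof. unfold Rabs; destruct (Rcase_abs (-1)); lra. Qed.

Section NS.
Variable X : NormedSpace.

Lemma vscal0 (x : X) : vscal 0 x = vzero.
Proof. apply vnorm_eq0. rewrite vnorm_scal, Rabs_R0. ring. Qed.

Lemma vnorm_zero : vnorm (@vzero X) = 0.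
Proof. rewrite <- (vscal0 vzero). rewrite vnorm_scal, Rabs_R0. ring. Qed.

Lemma vadd_neg (x : X) : vadd x (vscal (-1) x) = vzero.
Proof. rewrite <- (vscal_1 _ x) at 1. rewrite <- vscal_adds. replace (1 + -1) with 0 by ring. apply vscal0. Qed.

Lemma vnorm_nonneg (x : X) : 0 <= vnorm x.
Proof.
  assert (E := vnorm_triangle _ x (vscal (-1) x)). rewrite vadd_neg, vnorm_zero, vnorm_scal in E.
  rewrite Rabs_m1 in E. lra.
Qed.

Lemma vopp_scal (x : X) : vopp x = vscal (-1) x.
Proof.
  rewrite <- (vadd_0 _ (vopp x)). rewrite <- (vadd_neg x). rewrite vadd_assoc.
  rewrite (vadd_comm _ (vopp x) x). rewrite vadd_opp. rewrite vadd_comm. apply vadd_0.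
Qed.

Lemma vnorm_neg (x : X) : vnorm (vscal (-1) x) = vnorm x.
Proof. rewrite vnorm_scal, Rabs_m1. ring. Qed.

Lemma vadd_sub (y a : X) : vadd y (vsub a y) = a.
Proof.
  unfold vsub. rewrite (vadd_comm _ a). rewrite vadd_assoc. rewrite vadd_opp.
  rewrite vadd_comm. apply vadd_0.
Qed.

Lemma vnorm_sub_le (a y : X) : vnorm a <= vnorm y + vnorm (vsub a y).
Proof. rewrite <- (vadd_sub y a) at 1. apply vnorm_triangle. Qed.

Section SB.
Variable g : X -> R.
Hypothesis gb : exists C, forall x : X, vnorm x <= 1 -> g x <= C.

Lemma sb_lub : is_lub (fun s => exists x : X, vnorm x <= 1 /\ s = g x) (sup_ball g).
Proof.
  unfold sup_ball. apply epsilon_spec.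
  destruct (completeness (fun s => exists x : X, vnorm x <= 1 /\ s = g x)) as [l Hl].
  - destruct gb as [C HC]. exists C. intros s [x [Hx ->]]. auto.
  - exists (g vzero). exists vzero. split; auto. rewrite vnorm_zero. lra.
  - exists l; auto.
Qed.

Lemma sb_ge x : vnorm x <= 1 -> g x <= sup_ball g.
Proof. intros Hx. apply (proj1 sb_lub). exists x; auto. Qed.

Lemma sb_le c : (forall x, vnorm x <= 1 -> g x <= c) -> sup_ball g <= c.
Proof. intros H. apply (proj2 sb_lub). intros s [x [Hx ->]]. auto. Qed.

Lemma sb_approx e : 0 < e -> exists x, vnorm x <= 1 /\ sup_ball g - e < g x.
Proof.
  intros He. apply NNPP. intros Hn.
  assert (sup_ball g <= sup_ball g - e); [|lra].
  apply sb_le. intros x Hx. apply Rnot_lt_le. intros Hl. apply Hn. exists x; auto.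
Qed.

Hypothesis gs : forall a x, g (vscal a x) = Rabs a * g x.

Lemma g_zero : g vzero = 0.
Proof. rewrite <- (vscal0 vzero). rewrite gs, Rabs_R0. ring. Qed.

Lemma sb_nonneg : 0 <= sup_ball g.
Proof. rewrite <- g_zero. apply sb_ge. rewrite vnorm_zero. lra. Qed.

Lemma sb_scale x : g x <= sup_ball g * vnorm x.
Proof.
  destruct (Req_dec (vnorm x) 0) as [H0|H0].
  - apply vnorm_eq0 in H0. subst x. rewrite g_zero, vnorm_zero. lra.
  - assert (Hp : 0 < vnorm x) by (assert (H := vnorm_nonneg x); lra).
    assert (E := sb_ge (vscal (/ vnorm x) x)).
    rewrite vnorm_scal, gs in E. rewrite Rabs_right in E by (apply Rle_ge, Rlt_le, Rinv_0_lt_compat; auto).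
    rewrite Rinv_l in E by lra. specialize (E (Rle_refl 1)).
    apply (Rmult_le_compat_l (vnorm x)) in E; [|lra].
    rewrite <- Rmult_assoc, Rinv_r in E by lra. lra.
Qed.
End SB.
End NS.

Lemma incr_ge (phi : nat -> nat) : (forall n, (phi n < phi (S n))%nat) -> forall n, (n <= phi n)%nat.
Proof. intros H n. induction n. lia. specialize (H n). lia. Qed.

Lemma arch_inv e : 0 < e -> exists k : nat, / (INR k + 1) < e.
Proof.
  intros He. destruct (INR_archimed e 1 He) as [k Hk]. exists k.
  assert (0 <= INR k) by apply pos_INR.
  apply (Rmult_lt_reg_l (INR k + 1)); [lra|]. rewrite Rinv_r by lra. nra.
Qed.

Lemma Rabs_le_inv (x c : R) : Rabs x <= c -> -c <= x <= c.
Proof. unfold Rabs; destruct (Rcase_abs x); intros; lra. Qed.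

Lemma le_eps a b : (forall e, 0 < e -> a <= b + e) -> a <= b.
Proof. intros H. apply Rnot_lt_le. intros Hl. specialize (H ((a - b)/2) ltac:(lra)). lra. Qed.

Lemma HB_norm (Z : NormedSpace) (z : Z) : exists g : Z -> R,
  (forall a b, g (vadd a b) = g a + g b) /\ (forall c a, g (vscal c a) = c * g a) /\
  (forall v, Rabs (g v) <= vnorm v) /\ g z = vnorm z.
Proof.
  destruct (HB_point Z vzero vadd vscal (vadd_assoc Z) (vadd_comm Z) (vadd_0 Z)
    (vscal_assoc Z) (vscal_1 Z) (vscal_addv Z) (vscal_adds Z) (vscal0 Z)
    (fun _ => True) I (fun _ _ _ _ => I) (fun _ _ _ => I) vnorm z) as [g [[Ha Hs] [Hle Hz]]]; auto.
  - split. intros; apply vnorm_triangle. intros c u Hc _. rewrite vnorm_scal, Rabs_right; lra.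
  - exists g. split; [intros; apply Ha; auto|]. split; [intros; apply Hs; auto|]. split; auto.
    intros v. apply Rabs_le. split.
    + assert (E := Hle (vscal (-1) v) I). rewrite Hs, vnorm_neg in E by auto. lra.
    + apply Hle; auto.
Qed.

Definition lsup (w : nat -> R) : R :=
  inf_set (fun b => exists N, forall n, (n >= N)%nat -> w n <= b).

Section LS.
Variables (w v : nat -> R) (Cw Cv : R).
Hypothesis Hw : forall n, Rabs (w n) <= Cw.
Hypothesis Hv : forall n, Rabs (v n) <= Cv.

Lemma ls_bnd (w' : nat -> R) C : (forall n, Rabs (w' n) <= C) ->
  exists m, forall x, (exists N, forall n, (n >= N)%nat -> w' n <= x) -> m <= x.
Proof.
  intros H. exists (-C). intros x [N HN]. specialize (HN N (le_n _)). specialize (H N).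
  apply Rabs_le_inv in H. lra.
Qed.

Lemma ls_le_ev (w' : nat -> R) C b : (forall n, Rabs (w' n) <= C) ->
  (exists N, forall n, (n >= N)%nat -> w' n <= b) -> lsup w' <= b.
Proof. intros H1 H2. apply inf_lb; auto. eapply ls_bnd; eauto. Qed.

Lemma ls_ge (w' : nat -> R) C c : (forall n, Rabs (w' n) <= C) ->
  (forall b, (exists N, forall n, (n >= N)%nat -> w' n <= b) -> c <= b) -> c <= lsup w'.
Proof.
  intros H1 H2. apply inf_glb; auto. exists C. exists 0%nat. intros n _.
  specialize (H1 n). apply Rabs_le_inv in H1. lra.
Qed.

Lemma ls_add : lsup (fun n => w n + v n) <= lsup w + lsup v.
Proof.
  assert (Hs : forall n, Rabs (w n + v n) <= Cw + Cv).
  { intros n. eapply Rle_trans. apply Rabs_triang. specialize (Hw n). specialize (Hv n). lra. }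
  assert (K : forall b1 b2, (exists N, forall n, (n >= N)%nat -> w n <= b1) ->
     (exists N, forall n, (n >= N)%nat -> v n <= b2) -> lsup (fun n => w n + v n) <= b1 + b2).
  { intros b1 b2 [N1 H1] [N2 H2]. eapply ls_le_ev; eauto. exists (max N1 N2). intros n Hn.
    specialize (H1 n ltac:(lia)). specialize (H2 n ltac:(lia)). lra. }
  assert (K2 : forall b2, (exists N, forall n, (n >= N)%nat -> v n <= b2) ->
     lsup (fun n => w n + v n) - b2 <= lsup w).
  { intros b2 Hb2. eapply ls_ge; eauto. intros b1 Hb1. specialize (K b1 b2 Hb1 Hb2). lra. }
  assert (K3 : lsup (fun n => w n + v n) - lsup w <= lsup v).
  { eapply ls_ge; eauto. intros b2 Hb2. specialize (K2 b2 Hb2). lra. }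
  lra.
Qed.

Lemma ls_scal c : 0 < c -> lsup (fun n => c * w n) = c * lsup w.
Proof.
  intros Hc.
  assert (Hs : forall n, Rabs (c * w n) <= c * Cw).
  { intros n. rewrite Rabs_mult, Rabs_right by lra. apply Rmult_le_compat_l; auto; lra. }
  apply Rle_antisym.
  - assert (K : lsup (fun n => c * w n) / c <= lsup w).
    { eapply ls_ge; eauto. intros b [N HN].
      assert (E : lsup (fun n => c * w n) <= c * b).
      { eapply ls_le_ev; eauto. exists N. intros n Hn. specialize (HN n Hn). nra. }
      apply (Rmult_le_reg_l c); auto.
      replace (c * (lsup (fun n => c * w n) / c)) with (lsup (fun n => c * w n)) by (field; lra). lra. }
    apply (Rmult_le_compat_l c) in K; [|lra].
    replace (c * (lsup (fun n => c * w n) / c)) with (lsup (fun n => c * w n)) in K by (field; lra). lra.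
  - eapply ls_ge; eauto. intros b [N HN].
    assert (E : lsup w <= b / c).
    { eapply ls_le_ev; eauto. exists N. intros n Hn. specialize (HN n Hn).
      apply (Rmult_le_reg_l c); auto. replace (c * (b / c)) with b by (field; lra). lra. }
    apply (Rmult_le_compat_l c) in E; [|lra]. replace (c * (b / c)) with b in E by (field; lra). lra.
Qed.
End LS.

Lemma bf_bound {X : NormedSpace} (f : X -> R) : is_bounded_functional f ->
  exists C, forall x, vnorm x <= 1 -> Rabs (f x) <= C.
Proof.
  intros [_ [_ [C HC]]]. exists (Rabs C). intros x Hx. eapply Rle_trans. apply HC.
  assert (0 <= vnorm x) by apply vnorm_nonneg. assert (C <= Rabs C) by apply RRle_abs.
  assert (0 <= Rabs C) by apply Rabs_pos. nra.
Qed.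

Lemma banach_limit (X : NormedSpace) (u : nat -> X) : (forall n, vnorm (u n) <= 1) ->
  exists L : (X -> R) -> R,
    (forall f g, is_bounded_functional f -> is_bounded_functional g ->
        L (fun x => f x + g x) = L f + L g) /\
    (forall a f, is_bounded_functional f -> L (fun x => a * f x) = a * L f) /\
    (forall f, is_bounded_functional f -> L f <= lsup (fun n => f (u n))).
Proof.
  intros Hu.
  assert (Bd : forall f, is_bounded_functional f -> exists C, forall n, Rabs (f (u n)) <= C).
  { intros f Hf. destruct (bf_bound f Hf) as [C HC]. exists C. intros n; apply HC, Hu. }
  destruct (HB_main (X -> R) (fun _ => 0) (fun f g x => f x + g x) (fun a f x => a * f x))
    with (D := @is_bounded_functional X) (p := fun f => lsup (fun n => f (u n)))
    as [L [[La Ls] Lp]].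
  - intros; apply functional_extensionality; intros; ring.
  - intros; apply functional_extensionality; intros; ring.
  - intros; apply functional_extensionality; intros; ring.
  - intros; apply functional_extensionality; intros; ring.
  - intros; apply functional_extensionality; intros; ring.
  - intros; apply functional_extensionality; intros; ring.
  - intros; apply functional_extensionality; intros; ring.
  - intros; apply functional_extensionality; intros; ring.
  - split; [intros; ring|split; [intros; ring|]]. exists 0. intros. rewrite Rabs_R0.
    assert (0 <= vnorm x) by apply vnorm_nonneg. lra.
  - intros f g [fa [fs [Cf HCf]]] [ga [gs [Cg HCg]]]. split; [intros; rewrite fa, ga; ring|].
    split; [intros; rewrite fs, gs; ring|]. exists (Cf + Cg). intros x.
    eapply Rle_trans. apply Rabs_triang. specialize (HCf x). specialize (HCg x). lra.
  - intros a f [fa [fs [Cf HCf]]]. split; [intros; rewrite fa; ring|].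
    split; [intros; rewrite fs; ring|]. exists (Rabs a * Cf). intros x.
    rewrite Rabs_mult, Rmult_assoc. apply Rmult_le_compat_l; auto. apply Rabs_pos.
  - split.
    + intros f g Hf Hg. destruct (Bd f Hf) as [C1 H1]. destruct (Bd g Hg) as [C2 H2].
      apply (ls_add _ _ C1 C2); auto.
    + intros c f Hc Hf. destruct (Bd f Hf) as [C1 H1]. apply (ls_scal _ C1); auto.
  - exists L. split; [|split]; auto.
Qed.

Definition cptp {X Y : NormedSpace} (Sop : X -> Y) := forall u : nat -> X,
  (forall n, vnorm (u n) <= 1) ->
  exists (phi : nat -> nat) (l : Y), (forall n, (phi n < phi (S n))%nat) /\
    (forall eps, eps > 0 -> exists N, forall n, (n >= N)%nat -> vnorm (vsub (Sop (u (phi n))) l) < eps).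

Section Op.
Variables X Y : NormedSpace.
Variable Sop : X -> Y.
Hypothesis Slin : is_linear Sop.
Hypothesis Scpt : cptp Sop.

Lemma cpt_bdd : exists C, forall x, vnorm x <= 1 -> vnorm (Sop x) <= C.
Proof.
  apply NNPP. intros Hn.
  assert (H : forall n : nat, exists x, vnorm x <= 1 /\ INR n < vnorm (Sop x)).
  { intros n. apply NNPP. intros Hn2. apply Hn. exists (INR n). intros x Hx.
    apply Rnot_lt_le. intros Hl. apply Hn2. exists x; auto. }
  set (u := fun n => proj1_sig (constructive_indefinite_description _ (H n))).
  assert (Hu : forall n, vnorm (u n) <= 1 /\ INR n < vnorm (Sop (u n))).
  { intros n. unfold u. destruct (constructive_indefinite_description _ (H n)); auto. }
  destruct (Scpt u (fun n => proj1 (Hu n))) as [phi [l [Hphi Hc]]].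
  destruct (Hc 1 ltac:(lra)) as [N HN].
  destruct (INR_archimed 1 (vnorm l + 1) ltac:(lra)) as [k Hk].
  set (n := max N k). specialize (HN n ltac:(lia)).
  assert (E1 := vnorm_sub_le _ (Sop (u (phi n))) l).
  assert (E2 := proj2 (Hu (phi n))).
  assert (E3 : INR k <= INR (phi n)) by (apply le_INR; assert (G := incr_ge phi Hphi n); lia).
  lra.
Qed.

Lemma S_scal a x : vnorm (Sop (vscal a x)) = Rabs a * vnorm (Sop x).
Proof. rewrite (proj2 Slin). apply vnorm_scal. Qed.

Lemma op_ge x : vnorm x <= 1 -> vnorm (Sop x) <= opnorm Sop.
Proof. apply (sb_ge X (fun x => vnorm (Sop x)) cpt_bdd). Qed.

Lemma op_le c : (forall x, vnorm x <= 1 -> vnorm (Sop x) <= c) -> opnorm Sop <= c.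
Proof. apply (sb_le X (fun x => vnorm (Sop x)) cpt_bdd). Qed.

Lemma op_scale x : vnorm (Sop x) <= opnorm Sop * vnorm x.
Proof. apply (sb_scale X (fun x => vnorm (Sop x)) cpt_bdd S_scal). Qed.

Lemma op_nonneg : 0 <= opnorm Sop.
Proof. apply (sb_nonneg X (fun x => vnorm (Sop x)) cpt_bdd S_scal). Qed.

Lemma op_approx e : 0 < e -> exists x, vnorm x <= 1 /\ opnorm Sop - e < vnorm (Sop x).
Proof. apply (sb_approx X (fun x => vnorm (Sop x)) cpt_bdd). Qed.

Hypothesis HXR : is_reflexive X.
Hypothesis Hunit : exists e : X, vnorm e = 1.

Lemma attain : exists x, vnorm x = 1 /\ vnorm (Sop x) = opnorm Sop.
Proof.
  assert (H0 := op_nonneg).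
  destruct (Rle_lt_or_eq_dec 0 (opnorm Sop) H0) as [Hpos|Hz].
  2:{ destruct Hunit as [e He]. exists e. split; auto. assert (E := op_scale e).
      assert (0 <= vnorm (Sop e)) by apply vnorm_nonneg. rewrite <- Hz in E |- *. nra. }
  assert (H : forall n : nat, exists x, vnorm x <= 1 /\ opnorm Sop - / (INR n + 1) < vnorm (Sop x)).
  { intros n. apply op_approx. apply Rinv_0_lt_compat. assert (0 <= INR n) by apply pos_INR. lra. }
  set (xs := fun n => proj1_sig (constructive_indefinite_description _ (H n))).
  assert (Hx : forall n, vnorm (xs n) <= 1 /\ opnorm Sop - / (INR n + 1) < vnorm (Sop (xs n))).
  { intros n. unfold xs. destruct (constructive_indefinite_description _ (H n)); auto. }
  destruct (Scpt xs (fun n => proj1 (Hx n))) as [phi [y [Hphi Hc]]].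
  set (u := fun n => xs (phi n)).
  assert (Hu : forall n, vnorm (u n) <= 1) by (intros; apply Hx).
  assert (Hy : opnorm Sop <= vnorm y).
  { apply Rnot_lt_le. intros Hlt. set (e := (opnorm Sop - vnorm y) / 2).
    destruct (arch_inv e ltac:(unfold e; lra)) as [k Hk].
    destruct (Hc e ltac:(unfold e; lra)) as [N HN].
    set (n := max N k). specialize (HN n ltac:(lia)).
    assert (E1 := vnorm_sub_le _ (Sop (xs (phi n))) y).
    assert (E2 := proj2 (Hx (phi n))).
    assert (E3 : INR k <= INR (phi n)) by (apply le_INR; assert (G := incr_ge phi Hphi n); lia).
    assert (E4 : / (INR (phi n) + 1) <= / (INR k + 1)).
    { apply Rinv_le_contravar; [assert (0 <= INR k) by apply pos_INR; lra|lra]. }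
    unfold e in *. lra. }
  destruct (banach_limit X u Hu) as [L [La [Ls Lp]]].
  destruct (HXR L) as [x0 Hx0].
  - auto.
  - auto.
  - exists 1. intros f Hf. destruct (bf_bound f Hf) as [C HC].
    assert (Hd : forall n, Rabs (f (u n)) <= dualnorm f).
    { intros n. apply (sb_ge X (fun x => Rabs (f x)) (ex_intro _ C HC)). auto. }
    assert (Hb : forall n, Rabs (f (u n)) <= C) by (intros; apply HC; auto).
    apply Rabs_le. split.
    + assert (Hf' : is_bounded_functional (fun x => -1 * f x)).
      { destruct Hf as [fa [fs [C' HC']]]. split; [intros; rewrite fa; ring|].
        split; [intros; rewrite fs; ring|]. exists C'. intros x. rewrite Rabs_mult, Rabs_m1.
        specialize (HC' x). lra. }
      assert (E := Lp _ Hf'). rewrite Ls in E by auto.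
      assert (E2 : lsup (fun n => -1 * f (u n)) <= dualnorm f).
      { apply (ls_le_ev _ C). intros n. rewrite Rabs_mult, Rabs_m1. specialize (Hb n). lra.
        exists 0%nat. intros n _. specialize (Hd n). apply Rabs_le_inv in Hd. lra. }
      lra.
    + eapply Rle_trans. apply Lp; auto. rewrite Rmult_1_l. apply (ls_le_ev _ C); auto.
      exists 0%nat. intros n _. specialize (Hd n). apply Rabs_le_inv in Hd. lra.
  -
    assert (Hn1 : vnorm x0 <= 1).
    { destruct (HB_norm X x0) as [l [la [ls [lb lz]]]].
      assert (Hl : is_bounded_functional l).
      { split; auto. split; auto. exists 1. intros; rewrite Rmult_1_l; auto. }
      rewrite <- lz, <- Hx0 by auto. eapply Rle_trans. apply Lp; auto.
      apply (ls_le_ev _ 1). intros n. eapply Rle_trans. apply lb. auto.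
      exists 0%nat. intros n _. eapply Rle_trans. apply RRle_abs. eapply Rle_trans. apply lb. auto. }
    assert (HS : vnorm y <= vnorm (Sop x0)).
    { destruct (HB_norm Y y) as [g [ga [gs [gb gz]]]].
      set (f := fun x => g (Sop x)).
      destruct cpt_bdd as [CS HCS].
      assert (Hf : is_bounded_functional f).
      { split; [intros; unfold f; rewrite (proj1 Slin); auto|].
        split; [intros; unfold f; rewrite (proj2 Slin); auto|].
        exists (opnorm Sop). intros x. eapply Rle_trans. apply gb. apply op_scale. }
      assert (Bf : forall n, Rabs (f (u n)) <= CS).
      { intros n. eapply Rle_trans. apply gb. apply HCS; auto. }
      assert (Hf' : is_bounded_functional (fun x => -1 * f x)).
      { destruct Hf as [fa [fs [C' HC']]]. split; [intros; rewrite fa; ring|].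
        split; [intros; rewrite fs; ring|]. exists C'. intros x. rewrite Rabs_mult, Rabs_m1.
        specialize (HC' x). lra. }
      assert (Key : forall n, Rabs (f (u n) - g y) <= vnorm (vsub (Sop (u n)) y)).
      { intros n. unfold f. rewrite <- (vadd_sub Y y (Sop (u n))) at 1. rewrite ga.
        replace (g y + g (vsub (Sop (u n)) y) - g y) with (g (vsub (Sop (u n)) y)) by ring. apply gb. }
      assert (Lf : L f = g y).
      { apply Rle_antisym.
        - apply le_eps. intros e He. eapply Rle_trans. apply Lp; auto.
          apply (ls_le_ev _ CS); auto. destruct (Hc e He) as [N HN]. exists N. intros n Hn.
          specialize (HN n Hn). specialize (Key n). apply Rabs_le_inv in Key. unfold u in *. lra.
        - apply le_eps. intros e He. assert (E := Lp _ Hf'). rewrite Ls in E by auto.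
          assert (E2 : lsup (fun n => -1 * f (u n)) <= - g y + e).
          { apply (ls_le_ev _ CS). intros n. rewrite Rabs_mult, Rabs_m1. specialize (Bf n). lra.
            destruct (Hc e He) as [N HN]. exists N. intros n Hn.
            specialize (HN n Hn). specialize (Key n). apply Rabs_le_inv in Key. unfold u in *. lra. }
          lra. }
      rewrite Hx0 in Lf by auto. unfold f in Lf. rewrite <- gz, <- Lf.
      eapply Rle_trans. apply RRle_abs. apply gb. }
    exists x0. assert (E := op_scale x0).
    assert (vnorm (Sop x0) = opnorm Sop) by nra.
    split; auto. nra.
Qed.
End Op.

Section V.
Variable Y : NormedSpace.
Lemma swap4 (a b c e : Y) : vadd (vadd a b) (vadd c e) = vadd (vadd a c) (vadd b e).
Proof.
  rewrite <- !vadd_assoc. f_equal. rewrite !vadd_assoc. f_equal. apply vadd_comm.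
Qed.

Lemma vsub_add (a b c d : Y) : vsub (vadd a b) (vadd c d) = vadd (vsub a c) (vsub b d).
Proof. unfold vsub. rewrite !vopp_scal, vscal_addv. apply swap4. Qed.

Lemma vsub_scal l (b d : Y) : vsub (vscal l b) (vscal l d) = vscal l (vsub b d).
Proof.
  unfold vsub. rewrite !vopp_scal, vscal_addv, !vscal_assoc. f_equal. f_equal. ring.
Qed.

Lemma canc1 (a b : Y) l : vadd (vadd a (vscal l b)) (vscal (-l) b) = a.
Proof. rewrite <- vadd_assoc, <- vscal_adds. replace (l + - l) with 0 by ring. rewrite vscal0. apply vadd_0. Qed.

Lemma canc2 (v w : Y) : vadd (vadd v w) (vscal (-1) v) = w.
Proof. rewrite (vadd_comm _ v w). rewrite <- vadd_assoc, vadd_neg. apply vadd_0. Qed.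

Lemma convex_dir (u w : Y) : in_plus u w \/ in_minus u w.
Proof.
  apply NNPP. intros Hn. apply not_or_and in Hn. destruct Hn as [H1 H2].
  unfold in_plus, in_minus in *.
  apply not_all_ex_not in H1. destruct H1 as [l1 H1]. apply imply_to_and in H1. destruct H1 as [Hl1 H1].
  apply not_all_ex_not in H2. destruct H2 as [l2 H2]. apply imply_to_and in H2. destruct H2 as [Hl2 H2].
  apply Rnot_ge_lt in H1. apply Rnot_ge_lt in H2.
  assert (l1 <> 0). { intros ->. rewrite vscal0, vadd_0 in H1. lra. }
  assert (l2 <> 0). { intros ->. rewrite vscal0, vadd_0 in H2. lra. }
  set (al := - l2 / (l1 - l2)). set (be := l1 / (l1 - l2)).
  assert (Hal : 0 < al) by (unfold al; apply Rdiv_lt_0_compat; lra).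
  assert (Hbe : 0 < be) by (unfold be; apply Rdiv_lt_0_compat; lra).
  assert (Hs : al + be = 1) by (unfold al, be; field; lra).
  assert (Hz : al * l1 + be * l2 = 0) by (unfold al, be; field; lra).
  assert (Id : vadd (vscal al (vadd u (vscal l1 w))) (vscal be (vadd u (vscal l2 w))) = u).
  { rewrite !vscal_addv, !vscal_assoc, swap4, <- !vscal_adds, Hs, Hz, vscal0, vscal_1. apply vadd_0. }
  assert (E := vnorm_triangle _ (vscal al (vadd u (vscal l1 w))) (vscal be (vadd u (vscal l2 w)))).
  rewrite Id, !vnorm_scal, !Rabs_right in E by lra. nra.
Qed.
End V.

Lemma real_a (opT opA N lam s : R) : 0 < opA -> 0 <= opT -> 0 <= s <= 1 ->
  opT <= N + Rabs lam * opA -> Rabs lam * opA <= N + opT ->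
  (0 <= lam -> opT <= N) ->
  ((-1 - s) * (opT / opA) < lam -> lam < (-1 + s) * (opT / opA) -> s * opT <= N) ->
  s * opT <= N.
Proof.
  intros HA HT Hs H1 H2 H3 H4.
  set (c := opT / opA) in *. assert (Hc : c * opA = opT) by (unfold c; field; lra).
  destruct (Rle_or_lt 0 lam) as [Hl|Hl].
  - specialize (H3 Hl). nra.
  - rewrite Rabs_left in H1, H2 by lra.
    destruct (Rle_or_lt lam ((-1 - s) * c)) as [K1|K1].
    + assert (lam * opA <= (-1 - s) * c * opA) by (apply Rmult_le_compat_r; lra). nra.
    + destruct (Rle_or_lt ((-1 + s) * c) lam) as [K2|K2].
      * assert ((-1 + s) * c * opA <= lam * opA) by (apply Rmult_le_compat_r; lra). nra.
      * apply H4; auto.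
Qed.

Lemma real_b (opT opA N lam s : R) : 0 < opA -> 0 <= opT -> 0 <= s <= 1 ->
  opT <= N + Rabs lam * opA -> Rabs lam * opA <= N + opT ->
  (lam <= 0 -> opT <= N) ->
  ((1 - s) * (opT / opA) < lam -> lam < (1 + s) * (opT / opA) -> s * opT <= N) ->
  s * opT <= N.
Proof.
  intros HA HT Hs H1 H2 H3 H4. apply (real_a opT opA N (- lam) s); auto.
  - rewrite Rabs_Ropp; auto.
  - rewrite Rabs_Ropp; auto.
  - intros; apply H3; lra.
  - intros K1 K2. apply H4; lra.
Qed.

Lemma lin_zero {X Y : NormedSpace} (S : X -> Y) : is_linear S -> S vzero = vzero.
Proof. intros [_ Hs]. rewrite <- (vscal0 X vzero), Hs. apply vscal0. Qed.

Lemma add_lin {X Y : NormedSpace} (T A : X -> Y) l : is_linear T -> is_linear A ->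
  is_linear (op_add_scal T A l).
Proof.
  intros [Ta Ts] [Aa As]. unfold op_add_scal. split.
  - intros x y. rewrite Ta, Aa, vscal_addv. apply swap4.
  - intros a x. rewrite Ts, As, vscal_addv, !vscal_assoc. f_equal. f_equal. ring.
Qed.

Lemma add_cpt {X Y : NormedSpace} (T A : X -> Y) l : cptp T -> cptp A -> cptp (op_add_scal T A l).
Proof.
  intros Tc Ac u Hu.
  destruct (Tc u Hu) as [p1 [l1 [Hp1 Hc1]]].
  destruct (Ac (fun n => u (p1 n)) (fun n => Hu _)) as [p2 [l2 [Hp2 Hc2]]].
  exists (fun n => p1 (p2 n)), (vadd l1 (vscal l l2)). split.
  - intros n. assert (G := Hp2 n).
    assert (Mono : forall a b, (a < b)%nat -> (p1 a < p1 b)%nat).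
    { intros a b Hab. induction Hab. apply Hp1. specialize (Hp1 m). lia. }
    apply Mono; auto.
  - intros e He. set (k := 1 + Rabs l).
    assert (Hk : 0 < k) by (unfold k; assert (0 <= Rabs l) by apply Rabs_pos; lra).
    destruct (Hc1 (e / 2) ltac:(lra)) as [N1 H1].
    destruct (Hc2 (e / (2 * k)) ltac:(apply Rdiv_lt_0_compat; lra)) as [N2 H2].
    exists (max N1 N2). intros n Hn. unfold op_add_scal.
    rewrite vsub_add, vsub_scal. eapply Rle_lt_trans. apply vnorm_triangle.
    rewrite vnorm_scal.
    assert (G := incr_ge p2 Hp2 n).
    specialize (H1 (p2 n) ltac:(lia)). specialize (H2 n ltac:(lia)).
    assert (E : Rabs l * vnorm (vsub (A (u (p1 (p2 n)))) l2) <= k * (e / (2 * k))).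
    { assert (0 <= Rabs l) by apply Rabs_pos. assert (0 <= vnorm (vsub (A (u (p1 (p2 n)))) l2)) by apply vnorm_nonneg.
      assert (0 < e / (2 * k)) by (apply Rdiv_lt_0_compat; lra).
      set (e' := e / (2 * k)) in *. unfold k. nra. }
    replace (k * (e / (2 * k))) with (e / 2) in E by (field; lra). lra.
Qed.

Theorem mainTheorem1 (X Y : NormedSpace) (HXB : is_Banach X) (HXR : is_reflexive X)
  (T A : X -> Y) (HT : is_compact_op T) (HA : is_compact_op A)
  (HA0 : A <> (fun _ => vzero)) (eps : R) (He0 : 0 <= eps) (He1 : eps < 1) :
  BJ_eps_orth eps T A <->
  ((exists x, M_set T x /\ in_plus (T x) (A x)) /\
   (forall lam,
      (-1 - sqrt (1 - eps ^ 2)) * (opnorm T / opnorm A) < lam ->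
      lam < (-1 + sqrt (1 - eps ^ 2)) * (opnorm T / opnorm A) ->
      exists xl, unit_sphere xl /\
        vnorm (vadd (T xl) (vscal lam (A xl))) >= sqrt (1 - eps ^ 2) * opnorm T))
  \/
  ((exists y, M_set T y /\ in_minus (T y) (A y)) /\
   (forall lam,
      (1 - sqrt (1 - eps ^ 2)) * (opnorm T / opnorm A) < lam ->
      lam < (1 + sqrt (1 - eps ^ 2)) * (opnorm T / opnorm A) ->
      exists yl, unit_sphere yl /\
        vnorm (vadd (T yl) (vscal lam (A yl))) >= sqrt (1 - eps ^ 2) * opnorm T)).
Proof.
  destruct HT as [Tlin Tc]. destruct HA as [Alin Ac].
  set (s := sqrt (1 - eps ^ 2)).
  assert (Hs : 0 <= s <= 1).
  { unfold s. split. apply sqrt_pos. apply Rle_trans with (sqrt 1); [|rewrite sqrt_1; lra]. apply sqrt_le_1_alt. assert (0 <= eps ^ 2) by apply pow2_ge_0. lra. }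
  assert (Hx1 : exists x, A x <> vzero).
  { apply NNPP. intros Hn. apply HA0. apply functional_extensionality. intros x.
    apply NNPP. intros Hx. apply Hn. exists x; auto. }
  destruct Hx1 as [x1 Hx1].
  assert (Hn1 : 0 < vnorm x1).
  { assert (G := vnorm_nonneg X x1). destruct (Rle_lt_or_eq_dec _ _ G) as [G'|G']; auto.
    symmetry in G'. apply vnorm_eq0 in G'. subst x1. rewrite lin_zero in Hx1; auto. easy. }
  assert (Hunit : exists e : X, vnorm e = 1).
  { exists (vscal (/ vnorm x1) x1). rewrite vnorm_scal, Rabs_right.
    field; lra. apply Rle_ge, Rlt_le, Rinv_0_lt_compat; auto. }
  assert (HopA : 0 < opnorm A).
  { assert (G := op_scale X Y A Alin Ac x1).
    assert (G2 : 0 < vnorm (A x1)).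
    { assert (G3 := vnorm_nonneg Y (A x1)). destruct (Rle_lt_or_eq_dec _ _ G3) as [G'|G']; auto.
      symmetry in G'. apply vnorm_eq0 in G'. easy. }
    nra. }
  assert (HopT : 0 <= opnorm T) by (apply (op_nonneg X Y T Tlin Tc)).
  assert (SL : forall l, is_linear (op_add_scal T A l)) by (intros; apply add_lin; auto).
  assert (SC : forall l, cptp (op_add_scal T A l)) by (intros; apply add_cpt; auto).
  assert (Ineq1 : forall l x, vnorm x <= 1 -> vnorm (vadd (T x) (vscal l (A x))) <= opnorm (op_add_scal T A l)).
  { intros l x Hx. apply (op_ge X Y _ (SC l) x Hx). }
  assert (Ineq2 : forall l, opnorm T <= opnorm (op_add_scal T A l) + Rabs l * opnorm A).
  { intros l. apply (op_le X Y T Tc). intros x Hx.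
    rewrite <- (canc1 Y (T x) (A x) l) at 1. eapply Rle_trans. apply vnorm_triangle.
    rewrite vnorm_scal, Rabs_Ropp. apply Rplus_le_compat. apply Ineq1; auto.
    apply Rmult_le_compat_l. apply Rabs_pos. apply (op_ge X Y A Ac x Hx). }
  assert (Ineq3 : forall l, Rabs l * opnorm A <= opnorm (op_add_scal T A l) + opnorm T).
  { intros l. assert (G0 := op_nonneg X Y _ (SL l) (SC l)).
    destruct (Req_dec l 0) as [->|Hl].
    - rewrite Rabs_R0. lra.
    - assert (Hal : 0 < Rabs l) by (apply Rabs_pos_lt; auto).
      assert (K : opnorm A <= (opnorm (op_add_scal T A l) + opnorm T) / Rabs l).
      { apply (op_le X Y A Ac). intros x Hx.
        apply (Rmult_le_reg_l (Rabs l)); auto.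
        replace (Rabs l * ((opnorm (op_add_scal T A l) + opnorm T) / Rabs l))
          with (opnorm (op_add_scal T A l) + opnorm T) by (field; lra).
        rewrite <- vnorm_scal. rewrite <- (canc2 Y (T x) (vscal l (A x))).
        eapply Rle_trans. apply vnorm_triangle. rewrite vnorm_neg.
        apply Rplus_le_compat. apply Ineq1; auto. apply (op_ge X Y T Tc x Hx). }
      apply (Rmult_le_compat_l (Rabs l)) in K; [|lra].
      replace (Rabs l * ((opnorm (op_add_scal T A l) + opnorm T) / Rabs l))
          with (opnorm (op_add_scal T A l) + opnorm T) in K by (field; lra). lra. }
  split.
  - intros BJ.
    destruct (attain X Y T Tlin Tc HXR Hunit) as [x [Hx1' HxT]].
    assert (Sec : forall l, exists yl, unit_sphere yl /\
        vnorm (vadd (T yl) (vscal l (A yl))) >= s * opnorm T).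
    { intros l. destruct (attain X Y _ (SL l) (SC l) HXR Hunit) as [y [Hy1 Hy2]].
      exists y. split; auto. unfold op_add_scal in Hy2. rewrite Hy2. apply BJ. }
    destruct (convex_dir Y (T x) (A x)) as [Hp|Hm].
    + left. split. exists x. split; auto. split; auto. intros; apply Sec.
    + right. split. exists x. split; auto. split; auto. intros; apply Sec.
  - intros Hcase l. unfold BJ_eps_orth. apply Rle_ge. fold s.
    destruct Hcase as [[[x [[Hxu HxT] Hp]] Hint] | [[x [[Hxu HxT] Hm]] Hint]].
    + apply (real_a (opnorm T) (opnorm A) _ l s); auto.
      * intros Hl. rewrite <- HxT. eapply Rle_trans. apply Rge_le, (Hp l); lra.
        apply Ineq1. unfold unit_sphere in Hxu; lra.
      * intros K1 K2. destruct (Hint l K1 K2) as [xl [Hxl Hv]].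
        eapply Rle_trans. apply Rge_le, Hv. apply Ineq1. unfold unit_sphere in Hxl; lra.
    + apply (real_b (opnorm T) (opnorm A) _ l s); auto.
      * intros Hl. rewrite <- HxT. eapply Rle_trans. apply Rge_le, (Hm l); lra.
        apply Ineq1. unfold unit_sphere in Hxu; lra.
      * intros K1 K2. destruct (Hint l K1 K2) as [xl [Hxl Hv]].
        eapply Rle_trans. apply Rge_le, Hv. apply Ineq1. unfold unit_sphere in Hxl; lra.
Qed.
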